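(* Let $G$ be a finite group such that either $G$ cannot be generated by two elements, or $G$ has trivial center. Then the difference graph $\mathcal{D}(G)$ is null (has no edges) if and only if $\mathcal{D}(H)$ is null for every proper subgroup $H$ of $G$.
   Context: For a finite group $G$ with identity $e$: the intersection power graph $\mathcal{G}_I(G)$ has vertex set $G$, two distinct non-identity vertices $x,y$ being adjacent iff $\langle x\rangle\cap\langle y\rangle\neq\{e\}$, and $e$ being adjacent to every other vertex. The power graph $\mathcal{P}(G)$ has vertex set $G$, two distinct vertices being adjacent iff one is a power of the other. The undeleted difference graph of $G$ has vertex set $G$ and edge set $E(\mathcal{G}_I(G))\setminus E(\mathcal{P}(G))$; the difference graph $\mathcal{D}(G)$ is obtained from it by deleting all isolated vertices. $\mathcal{D}(G)$ is null iff it has no edges, i.e. iff $\mathcal{G}_I(G)=\mathcal{P}(G)$. *)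

(* Defs.v *)
From mathcomp Require Import all_boot all_fingroup all_solvable.
Set Implicit Arguments. Unset Strict Implicit. Unset Printing Implicit Defensive.
Local Open Scope group_scope.

Definition ipg_adj (gT : finGroupType) (x y : gT) : Prop :=
  x <> y /\ (x = 1 \/ y = 1 \/ <[x]> :&: <[y]> <> 1).

Definition pg_adj (gT : finGroupType) (x y : gT) : Prop :=
  x <> y /\ ((exists k : nat, x = y ^+ k) \/ (exists k : nat, y = x ^+ k)).

(* D(H) is null: the edge set E(G_I(H)) \ E(P(H)) is empty (vertices range over H;
   cyclic subgroups and powers of elements of H are the same computed in H or gT). *)
Definition diff_graph_null (gT : finGroupType) (H : {set gT}) : Prop :=
  forall x y, x \in H -> y \in H -> ipg_adj x y -> pg_adj x y.

(* Main.v *)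
Require Import Defs.
From mathcomp Require Import all_boot all_fingroup all_solvable.
Local Open Scope group_scope.

Theorem theorem2p2 (gT : finGroupType) (G : {group gT}) :
  (~ (exists x y : gT, G :=: <<[set x; y]>>) \/ 'Z(G) = 1) ->
  (diff_graph_null G <->
     forall H : {group gT}, H \proper G -> diff_graph_null H).
Proof.
move=> hyp; split.
  move=> hG H /proper_sub sHG x y xH yH; apply: hG; exact: (subsetP sHG).
move=> hH x y xG yG [nxy adj].
case: adj => [ex1 | [ey1 | hK]].
- by split=> //; left; exists 0%N; rewrite ex1.
- by split=> //; right; exists 0%N; rewrite ey1.
have sXG : <<[set x; y]>> \subset G.
  by rewrite gen_subG subUset !sub1set xG yG.
case pr: (<<[set x; y]>>%G \proper G).
  apply: (hH _ pr) => //=.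
  - by rewrite mem_gen // !inE eqxx.
  - by rewrite mem_gen // !inE eqxx orbT.
  - by split=> //; right; right.
have eG : G :=: <<[set x; y]>>.
  move: pr; rewrite properEneq sXG andbT => /negbFE /eqP /= ->.
  by [].
exfalso; case: hyp => [hn | hZ]; first by apply: hn; exists x, y.
apply: hK; apply/trivgP; rewrite -hZ.
rewrite /center subsetI subIset ?(subsetP (cycle_subG x)) //=; last first.
  by rewrite cycle_subG xG.
rewrite eG cent_gen centsC subUset !sub1set.
apply/andP; split.
- apply: (subsetP (centS (subsetIl _ _))).
  exact: (subsetP (cycle_abelian x)) (cycle_id x).
- apply: (subsetP (centS (subsetIr _ _))).
  exact: (subsetP (cycle_abelian y)) (cycle_id y).
Qed.
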